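(* Let $A$ be a locally-complex Cayley--Dickson algebra and $f(x)\in A[x]$. Then every root in $A$ of $f'(x)$ is contained in the Gauss--Lucas snail $\mathrm{sn}(f)$.
   Context: Real Cayley--Dickson algebras: $A_0=\mathbb{R}$ with identity involution, $A_{k+1}=A_k\{\gamma_k\}=A_k\times A_k$ with product $(a,b)(c,d)=(ac+\gamma_k\bar d b,\ da+b\bar c)$ and involution $\overline{(a,b)}=(\bar a,-b)$. A real unital algebra is locally-complex if every non-real element generates a subalgebra isomorphic to $\mathbb{C}$ (for Cayley--Dickson algebras: all $\gamma_k=-1$ up to isomorphism). Trace $\mathrm{tr}(\lambda)=\lambda+\bar\lambda$, norm $\mathrm{n}(\lambda)=\bar\lambda\lambda$; $\langle\cdot,\cdot\rangle$ is the Euclidean inner product with $\langle a,a\rangle=\mathrm{n}(a)$. For $I$ with trace $0$ and norm $1$, $\mathbb{C}_I=\mathbb{R}+\mathbb{R}I\cong\mathbb{C}$ and $\pi_I:A\to\mathbb{C}_I$ is the orthogonal projection. $A[x]=A\otimes_{\mathbb{R}}\mathbb{R}[x]$ with central $x$; for $f(x)=\sum_k a_kx^k$, $f_I(x)=\sum_k\pi_I(a_k)x^k\in\mathbb{C}_I[x]$; substitution $f(r)=\sum_k a_k(r^k)$; formal derivative $f'(x)=\sum_k ka_kx^{k-1}$. If $f_I$ is non-constant, $K_{\mathbb{C}_I}(f_I)$ is the convex hull in $\mathbb{C}_I$ of the roots of $f_I$ in $\mathbb{C}_I$; otherwise $K_{\mathbb{C}_I}(f_I)=\mathbb{C}_I$.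 The Gauss--Lucas snail is $\mathrm{sn}(f)=\bigcup_I K_{\mathbb{C}_I}(f_I)$, the union over all $I\in A$ with $\mathrm{tr}(I)=0$, $\mathrm{n}(I)=1$. *)

(* Defs.v *)
(* Real Cayley--Dickson algebras with all gamma_k = -1. *)
From mathcomp Require Import all_boot all_order all_algebra.
From mathcomp Require Import reals.
Set Implicit Arguments. Unset Strict Implicit. Unset Printing Implicit Defensive.
Import Order.TTheory GRing.Theory Num.Theory.
Local Open Scope ring_scope.

Section CayleyDickson.
Variable R : realType.

Fixpoint CD (n : nat) : Type :=
  match n with 0 => R | k.+1 => (CD k * CD k)%type end.

Fixpoint cdreal (n : nat) (r : R) : CD n :=
  match n return CD n with 0 => r | k.+1 => (cdreal k r, cdreal k 0) end.

Definition cdzero n : CD n := cdreal n 0.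
Definition cdone n : CD n := cdreal n 1.

Fixpoint cdadd (n : nat) : CD n -> CD n -> CD n :=
  match n return CD n -> CD n -> CD n with
  | 0 => fun a b => a + b
  | k.+1 => fun x y => (cdadd x.1 y.1, cdadd x.2 y.2)
  end.

Fixpoint cdopp (n : nat) : CD n -> CD n :=
  match n return CD n -> CD n with
  | 0 => fun a => - a
  | k.+1 => fun x => (cdopp x.1, cdopp x.2)
  end.

Fixpoint cdscale (n : nat) (r : R) : CD n -> CD n :=
  match n return CD n -> CD n with
  | 0 => fun a => r * a
  | k.+1 => fun x => (cdscale r x.1, cdscale r x.2)
  end.

Fixpoint cdconj (n : nat) : CD n -> CD n :=
  match n return CD n -> CD n with
  | 0 => fun a => a
  | k.+1 => fun x => (cdconj x.1, cdopp x.2)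
  end.

(* (a,b)(c,d) = (ac + gamma conj(d) b, da + b conj(c)) with gamma = -1 *)
Fixpoint cdmul (n : nat) : CD n -> CD n -> CD n :=
  match n return CD n -> CD n -> CD n with
  | 0 => fun a b => a * b
  | k.+1 => fun x y =>
      (cdadd (cdmul x.1 y.1) (cdopp (cdmul (cdconj y.2) x.2)),
       cdadd (cdmul y.2 x.1) (cdmul x.2 (cdconj y.1)))
  end.

Fixpoint cdinner (n : nat) : CD n -> CD n -> R :=
  match n return CD n -> CD n -> R with
  | 0 => fun a b => a * b
  | k.+1 => fun x y => cdinner x.1 y.1 + cdinner x.2 y.2
  end.

Definition cdtr n (a : CD n) : CD n := cdadd a (cdconj a).
Definition cdnorm n (a : CD n) : CD n := cdmul (cdconj a) a.

Definition imag_unit n (I : CD n) : Prop :=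
  cdtr I = cdzero n /\ cdnorm I = cdone n.

Definition in_CI n (I z : CD n) : Prop :=
  exists a b : R, z = cdadd (cdreal n a) (cdscale b I).

(* orthogonal projection onto C_I (1 and I are orthonormal when I is an
   imaginary unit) *)
Definition proj_CI n (I a : CD n) : CD n :=
  cdadd (cdscale (cdinner a (cdone n)) (cdone n)) (cdscale (cdinner a I) I).

Fixpoint cdpow n (r : CD n) (k : nat) : CD n :=
  match k with 0 => cdone n | k'.+1 => cdmul r (cdpow r k') end.

(* polynomials in A[x] as coefficient lists [a_0; a_1; ...] *)
Definition cdeval n (f : seq (CD n)) (r : CD n) : CD n :=
  \big[@cdadd n/cdzero n]_(i < size f) cdmul (nth (cdzero n) f i) (cdpow r i).

Definition cdderiv n (f : seq (CD n)) : seq (CD n) :=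
  mkseq (fun k => cdscale (k.+1)%:R (nth (cdzero n) f k.+1)) (size f).-1.

Definition polyI n (I : CD n) (f : seq (CD n)) : seq (CD n) :=
  map (proj_CI I) f.

Definition nonconstant n (g : seq (CD n)) : Prop :=
  exists k, (0 < k)%N /\ nth (cdzero n) g k <> cdzero n.

Definition in_convex_hull n (P : CD n -> Prop) (z : CD n) : Prop :=
  exists (k : nat) (w : 'I_k -> R) (p : 'I_k -> CD n),
    (forall i, 0 <= w i) /\ (forall i, P (p i)) /\
    \sum_(i < k) w i = 1 /\
    z = \big[@cdadd n/cdzero n]_(i < k) cdscale (w i) (p i).

Definition K_CI n (I : CD n) (f : seq (CD n)) (z : CD n) : Prop :=
  let fI := polyI I f in
  (nonconstant fI /\
     in_convex_hull (fun y => in_CI I y /\ cdeval fI y = cdzero n) z)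
  \/ (~ nonconstant fI /\ in_CI I z).

Definition snail n (f : seq (CD n)) (z : CD n) : Prop :=
  exists I : CD n, imag_unit I /\ K_CI I f z.
End CayleyDickson.

(* Main.v *)
Require Import Defs.
From mathcomp Require Import all_boot all_order all_algebra.
From mathcomp Require Import reals.
From mathcomp Require Import complex ring lra.
Set Implicit Arguments. Unset Strict Implicit. Unset Printing Implicit Defensive.
Import Order.TTheory GRing.Theory Num.Theory.


Section GL.
Local Open Scope ring_scope.
Variable C : numClosedFieldType.

Lemma logder (s : seq C) (z : C) : (forall x, x \in s -> z - x != 0) ->
  (\prod_(x <- s) ('X - x%:P))^`().[z] =
  (\prod_(x <- s) ('X - x%:P)).[z] * \sum_(x <- s) (z - x)^-1.
Proof.
elim: s => [|a s IH] hs; first by rewrite !big_nil derivC !hornerE.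
have ha : z - a != 0 by apply: hs; rewrite inE eqxx.
have hs' : forall x, x \in s -> z - x != 0 by move=> x xs; apply: hs; rewrite inE xs orbT.
rewrite !big_cons derivM derivXsubC hornerD !hornerM hornerXsubC hornerE IH //.
by field.
Qed.

Lemma GL (p : {poly C}) (z : C) : (1 < size p)%N -> p^`().[z] = 0 ->
  exists k (w : 'I_k -> C) (zeta : 'I_k -> C),
    (forall i, 0 <= w i) /\ (forall i, root p (zeta i)) /\
    \sum_(i < k) w i = 1 /\ z = \sum_(i < k) w i * zeta i.
Proof.
move=> sp hd.
case: (boolP (root p z)) => [rz | nrz].
  exists 1%N, (fun _ => 1), (fun _ => z); split; first by move=> _; exact: ler01.
  by split=> //; rewrite !big_ord1 mul1r.
have [rs hp] := closed_field_poly_normal p.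
set lc := lead_coef p in hp.
set Q := \prod_(x <- rs) ('X - x%:P) in hp.
have p0 : p != 0 by rewrite -size_poly_gt0 (ltn_trans _ sp).
have lc0 : lc != 0 by rewrite lead_coef_eq0.
have Qz : Q.[z] != 0.
  by move: nrz; rewrite /root hp hornerZ mulf_eq0 negb_or => /andP [].
have neq : forall x, x \in rs -> z - x != 0.
  move=> x xs; rewrite subr_eq0; apply/eqP => ezx; move: Qz.
  by rewrite -/(root Q z) root_prod_XsubC ezx xs.
have S0 : \sum_(x <- rs) (z - x)^-1 = 0.
  move: hd; rewrite hp derivZ hornerZ logder // => /eqP.
  by rewrite !mulf_eq0 (negbTE lc0) (negbTE Qz) /= => /eqP.
have roots : forall x, x \in rs -> root p x.
  move=> x xs; rewrite /root hp hornerZ; have : root Q x by rewrite root_prod_XsubC.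
  by rewrite /root => /eqP ->; rewrite mulr0.
have szrs : (0 < size rs)%N.
  move: sp; rewrite hp size_scale // size_prod_XsubC. by case: rs {hp Q Qz neq S0 roots}.
pose m x := `|z - x| ^- 2.
have m_gt0 : forall x, x \in rs -> 0 < m x.
  by move=> x xs; rewrite /m invr_gt0 exprn_gt0 // normr_gt0 neq.
have key : \sum_(x <- rs) m x * (z - x) = 0.
  suff -> : \sum_(x <- rs) m x * (z - x) = (\sum_(x <- rs) (z - x)^-1)^*.
    by rewrite S0 conjC0.
  rewrite rmorph_sum; apply: eq_big_seq => x xs.
  rewrite invC_norm rmorphM /= geC0_conj ?conjCK //.
  by apply: ltW; apply: m_gt0.
have m_ge0 : forall x, 0 <= m x by move=> x; rewrite /m invr_ge0 exprn_ge0.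
have M_gt0 : 0 < \sum_(x <- rs) m x.
  have [a [s ers]] : exists a s, rs = a :: s by case: (rs) szrs => // a s _; exists a, s.
  rewrite ers big_cons; apply: ltr_wpDr; last by apply: m_gt0; rewrite ers inE eqxx.
  by apply: sumr_ge0.
set M := \sum_(x <- rs) m x in M_gt0.
have M0 : M != 0 by rewrite gt_eqF.
exists (size rs), (fun i => m rs`_i / M), (fun i => rs`_i).
split; first by move=> i; rewrite divr_ge0 // ltW.
split; first by move=> i; apply: roots; rewrite mem_nth.
have conv : forall F : C -> C, \sum_(i < size rs) F rs`_i = \sum_(x <- rs) F x.
  by move=> F; rewrite (big_nth 0) big_mkord.
split.
  by rewrite -mulr_suml (conv (fun x => m x)) divff.
rewrite (conv (fun x => m x / M * x)).
have : \sum_(x <- rs) (m x * z - m x * x) = 0.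
  by rewrite -[RHS]key; apply: eq_bigr => x _; rewrite mulrBr.
rewrite sumrB -mulr_suml -/M => /eqP; rewrite subr_eq0 => /eqP e1.
rewrite (eq_bigr (fun x => (m x * x) / M)); last by move=> x _; rewrite mulrAC.
by rewrite -mulr_suml -e1 mulrC mulKf.
Qed.

End GL.


Section CDlemmas.
Local Open Scope ring_scope.
Variable R : realType.
Implicit Types (a b : R).

Notation A n := (CD R n).
Notation "0_ n" := (cdzero R n) (at level 0).
Notation "1_ n" := (cdone R n) (at level 0).

Lemma addC n (x y : A n) : cdadd x y = cdadd y x.
Proof. elim: n x y => [|n IH] /= x y; first exact: addrC. by rewrite IH (IH x.2). Qed.

Lemma addA n (x y z : A n) : cdadd x (cdadd y z) = cdadd (cdadd x y) z.
Proof. elim: n x y z => [|n IH] /= x y z; first exact: addrA. by rewrite IH (IH x.2). Qed.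

Lemma add0 n (x : A n) : cdadd 0_n x = x.
Proof. elim: n x => [|n IH] /= x; first exact: add0r. rewrite /cdzero /= in IH *.
by rewrite !IH; case: x. Qed.

Lemma addx0 n (x : A n) : cdadd x 0_n = x.
Proof. by rewrite addC add0. Qed.

Lemma scaleDr n a (x y : A n) : cdscale a (cdadd x y) = cdadd (cdscale a x) (cdscale a y).
Proof. elim: n x y => [|n IH] /= x y; first exact: mulrDr. by rewrite !IH. Qed.

Lemma scaleDl n a b (x : A n) : cdscale (a + b) x = cdadd (cdscale a x) (cdscale b x).
Proof. elim: n x => [|n IH] /= x; first exact: mulrDl. by rewrite !IH. Qed.

Lemma scaleA n a b (x : A n) : cdscale a (cdscale b x) = cdscale (a * b) x.
Proof. elim: n x => [|n IH] /= x; first exact: mulrA. by rewrite !IH. Qed.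

Lemma scale1 n (x : A n) : cdscale 1 x = x.
Proof. elim: n x => [|n IH] /= x; first exact: mul1r. by rewrite !IH; case: x. Qed.

Lemma scale0 n (x : A n) : cdscale 0 x = 0_n.
Proof. elim: n x => [|n IH] /= x; first exact: mul0r. rewrite /cdzero /= in IH *. by rewrite !IH. Qed.

Lemma scalex0 n a : cdscale a 0_n = 0_n.
Proof. by rewrite -(scale0 0_n) scaleA mulr0. Qed.

Lemma oppE n (x : A n) : cdopp x = cdscale (-1) x.
Proof. elim: n x => [|n IH] /= x; first by rewrite mulN1r. by rewrite !IH. Qed.

Lemma addN n (x : A n) : cdadd x (cdscale (-1) x) = 0_n.
Proof. by rewrite -{1}(scale1 x) -scaleDl subrr scale0. Qed.

Lemma realE n a : cdreal n a = cdscale a 1_n.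
Proof. elim: n a => [|n IH] /= a; first by rewrite mulr1.
by rewrite /cdone /= !IH !scaleA mulr0 mulr1. Qed.

Lemma realD n a b : cdreal n (a + b) = cdadd (cdreal n a) (cdreal n b).
Proof. by rewrite !realE scaleDl. Qed.

Lemma conjD n (x y : A n) : cdconj (cdadd x y) = cdadd (cdconj x) (cdconj y).
Proof. elim: n x y => [|n IH] /= x y; first by []. by rewrite IH !oppE scaleDr. Qed.

Lemma conjZ n a (x : A n) : cdconj (cdscale a x) = cdscale a (cdconj x).
Proof. elim: n x => [|n IH] /= x; first by []. by rewrite IH !oppE !scaleA mulrC. Qed.

Lemma conjK n (x : A n) : cdconj (cdconj x) = x.
Proof. elim: n x => [|n IH] /= x; first by []. by rewrite IH !oppE scaleA mulrNN mulr1 scale1; case: x. Qed.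

Lemma conj1 n : cdconj 1_n = 1_n.
Proof. elim: n => [|n IH] //=. rewrite /cdone /= -/(cdone R n) IH oppE -/(cdzero R n).
by rewrite scalex0. Qed.

Lemma conj0 n : cdconj 0_n = 0_n.
Proof. by rewrite -{1}(scale0 (cdone R n)) conjZ scale0. Qed.

Lemma addACA n (x y z t : A n) :
  cdadd (cdadd x y) (cdadd z t) = cdadd (cdadd x z) (cdadd y t).
Proof. by rewrite -!addA (addA y) (addC y) -addA. Qed.

Lemma mulD n : (forall x y z : A n, cdmul (cdadd x y) z = cdadd (cdmul x z) (cdmul y z))
  /\ (forall x y z : A n, cdmul x (cdadd y z) = cdadd (cdmul x y) (cdmul x z)).
Proof.
elim: n => [|n [IHl IHr]]; first by split=> x y z /=; [exact: mulrDl | exact: mulrDr].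
split=> [[x1 x2] [y1 y2] [z1 z2]|[x1 x2] [y1 y2] [z1 z2]] /=.
  by rewrite !IHl !IHr !oppE scaleDr; congr pair; exact: addACA.
by rewrite !conjD !IHl !IHr !oppE scaleDr; congr pair; exact: addACA.
Qed.
Lemma mulDl n (x y z : A n) : cdmul (cdadd x y) z = cdadd (cdmul x z) (cdmul y z).
Proof. by case: (mulD n) => ->. Qed.
Lemma mulDr n (x y z : A n) : cdmul x (cdadd y z) = cdadd (cdmul x y) (cdmul x z).
Proof. by case: (mulD n) => _ ->. Qed.

Lemma mulZ n : (forall a (x y : A n), cdmul (cdscale a x) y = cdscale a (cdmul x y))
  /\ (forall a (x y : A n), cdmul x (cdscale a y) = cdscale a (cdmul x y)).
Proof.
elim: n => [|n [IHl IHr]]; first by split=> a x y /=; [rewrite mulrA | rewrite mulrCA].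
split=> a [x1 x2] [y1 y2] /=.
  by rewrite !IHl !IHr !oppE !scaleDr !scaleA mulN1r mulrN1.
by rewrite !conjZ !IHl !IHr !oppE !scaleDr !scaleA mulN1r mulrN1.
Qed.
Lemma mulZl n a (x y : A n) : cdmul (cdscale a x) y = cdscale a (cdmul x y).
Proof. by case: (mulZ n) => ->. Qed.
Lemma mulZr n a (x y : A n) : cdmul x (cdscale a y) = cdscale a (cdmul x y).
Proof. by case: (mulZ n) => _ ->. Qed.
Lemma cdmul0l n (x : A n) : cdmul 0_n x = 0_n.
Proof. by rewrite -{1}(scale0 (cdzero R n)) mulZl scale0. Qed.
Lemma cdmul0r n (x : A n) : cdmul x 0_n = 0_n.
Proof. by rewrite -{1}(scale0 (cdzero R n)) mulZr scale0. Qed.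

Lemma mul1 n : (forall x : A n, cdmul 1_n x = x) /\ (forall x : A n, cdmul x 1_n = x).
Proof.
elim: n => [|n [IHl IHr]]; first by split=> x /=; rewrite ?mul1r ?mulr1.
have E : cdone R n.+1 = (1_n, 0_n) by [].
split=> [[x1 x2]|[x1 x2]]; rewrite E /=.
  by rewrite IHl IHr cdmul0r oppE scalex0 addx0 cdmul0l addx0.
by rewrite IHr conj1 IHr conj0 cdmul0l oppE scalex0 addx0 cdmul0l add0.
Qed.
Lemma cdmul1l n (x : A n) : cdmul 1_n x = x. Proof. by case: (mul1 n). Qed.
Lemma cdmul1r n (x : A n) : cdmul x 1_n = x. Proof. by case: (mul1 n). Qed.

End CDlemmas.


Section CDlemmas.
Local Open Scope ring_scope.
Variable R : realType.
Implicit Types (a b : R).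

Notation A n := (CD R n).
Notation "0_ n" := (cdzero R n) (at level 0).
Notation "1_ n" := (cdone R n) (at level 0).

Lemma innerC n (x y : A n) : cdinner x y = cdinner y x.
Proof. elim: n x y => [|n IH] /= x y; first exact: mulrC. by rewrite IH (IH x.2). Qed.
Lemma innerDl n (x y z : A n) : cdinner (cdadd x y) z = cdinner x z + cdinner y z.
Proof. elim: n x y z => [|n IH] /= x y z; first exact: mulrDl. by rewrite !IH addrACA. Qed.
Lemma innerZl n a (x y : A n) : cdinner (cdscale a x) y = a * cdinner x y.
Proof. elim: n x y => [|n IH] /= x y; first by rewrite mulrA. by rewrite !IH mulrDr. Qed.
Lemma innerDr n (x y z : A n) : cdinner z (cdadd x y) = cdinner z x + cdinner z y.
Proof. by rewrite !(innerC z) innerDl. Qed.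
Lemma innerZr n a (x y : A n) : cdinner y (cdscale a x) = a * cdinner y x.
Proof. by rewrite !(innerC y) innerZl. Qed.
Lemma inner0l n (y : A n) : cdinner 0_n y = 0.
Proof. by rewrite -(scale0 (cdzero R n)) innerZl mul0r. Qed.
Lemma inner0r n (y : A n) : cdinner y 0_n = 0.
Proof. by rewrite innerC inner0l. Qed.
Lemma inner11 n : cdinner 1_n 1_n = 1.
Proof. elim: n => [|n IH] /=; first exact: mulr1.
by rewrite /cdone /= -/(cdone R n) IH -/(cdzero R n) inner0l addr0. Qed.
Lemma innerconj1 n (x : A n) : cdinner (cdconj x) 1_n = cdinner x 1_n.
Proof. elim: n x => [|n IH] /= x; first by [].
by rewrite /cdone /= -/(cdone R n) IH -/(cdzero R n) !inner0r. Qed.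

Lemma trE n (x : A n) : cdadd x (cdconj x) = cdscale (2 * cdinner x 1_n) 1_n.
Proof. elim: n x => [|n IH] /= x; first by rewrite /cdone /= !mulr1 mulr_natl mulr2n.
rewrite /cdone /= -/(cdone R n) -/(cdzero R n) IH inner0r addr0 scalex0 oppE.
by rewrite addN. Qed.

Lemma normE n (x : A n) : cdmul (cdconj x) x = cdscale (cdinner x x) 1_n.
Proof. elim: n x => [|n IH] /= x; first by rewrite mulr1.
rewrite /cdone /= -/(cdone R n) -/(cdzero R n) scalex0 IH !oppE mulZr mulZl.
by rewrite scaleA mulrNN mulr1 IH scale1 -scaleDl addN. Qed.

Lemma inner_ge0 n (x : A n) : 0 <= cdinner x x.
Proof. elim: n x => [|n IH] /= x; first by rewrite -expr2 sqr_ge0. by rewrite addr_ge0. Qed.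

Lemma inner_eq0 n (x : A n) : cdinner x x = 0 -> x = 0_n.
Proof. elim: n x => [|n IH] /= x; first by move/eqP; rewrite mulf_eq0 orbb => /eqP.
move/eqP; rewrite paddr_eq0 ?inner_ge0 // => /andP [/eqP/IH h1 /eqP/IH h2].
by case: x h1 h2 => /= x1 x2 -> ->. Qed.

Lemma adj n : (forall x y z : A n, cdinner (cdmul x y) z = cdinner x (cdmul z (cdconj y)))
  /\ (forall x y z : A n, cdinner (cdmul x y) z = cdinner y (cdmul (cdconj x) z)).
Proof.
elim: n => [|n [IHr IHl]]; first by split=> x y z /=; ring.
split=> [[a b] [c d] [e f]|[a b] [c d] [e f]] /=.
  rewrite !oppE ?conjZ ?conjK ?mulZl ?mulZr !innerDl !innerDr ?innerZl ?innerZr.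
  have h1 := IHr a c e; have h2 := IHl d a f; have h3 := IHl (cdconj d) b e;
  have h4 := IHr b (cdconj c) f; rewrite conjK in h3; rewrite conjK in h4; lra.
rewrite !oppE ?conjZ ?conjK ?mulZl ?mulZr !innerDl !innerDr ?innerZl ?innerZr.
have h1 := IHl a c e; have h2 := IHr d a f; have h3 := IHl (cdconj d) b e;
have h4 := IHr b (cdconj c) f; have h5 := IHl (cdconj f) b c; have h6 := IHr d e b.
rewrite conjK in h3; rewrite conjK in h4; rewrite conjK in h5; rewrite innerC in h5; rewrite innerC in h6.
lra.
Qed.
End CDlemmas.


Section Phi.
Local Open Scope ring_scope.
Variable R : realType.
Variable n : nat.
Notation A := (CD R n).
Notation "0_" := (cdzero R n).
Notation "1_" := (cdone R n).
Variable J : A.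
Hypothesis hJ : imag_unit J.

Lemma addNl m (x : CD R m) : cdadd (cdscale (-1) x) x = cdzero R m.
Proof. by rewrite addC addN. Qed.

Lemma conjJ : cdconj J = cdscale (-1) J.
Proof. case: hJ => h _; rewrite /cdtr in h.
by rewrite -[cdconj J]add0 -(addNl J) -addA h addx0. Qed.

Lemma JJ : cdmul J J = cdscale (-1) 1_.
Proof. case: hJ => _ h; rewrite /cdnorm conjJ mulZl in h.
by rewrite -h scaleA mulrNN mulr1 scale1. Qed.

Lemma JJc : cdmul J (cdconj J) = 1_.
Proof. by rewrite conjJ mulZr JJ scaleA mulrNN mulr1 scale1. Qed.

Lemma inner1s a : cdinner (cdscale a 1_) 1_ = a.
Proof. by rewrite innerZl inner11 mulr1. Qed.

Lemma innerJ1 : cdinner J 1_ = 0.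
Proof. case: hJ => h _; rewrite /cdtr trE in h.
have := inner1s (2 * cdinner J 1_); rewrite h inner0l => /esym/eqP.
by rewrite mulf_eq0 pnatr_eq0 /= => /eqP. Qed.

Lemma innerJJ : cdinner J J = 1.
Proof. have := (adj R n).2 (cdconj J) J 1_.
by case: hJ => _ h; rewrite /cdnorm in h; rewrite h conjK cdmul1r inner11. Qed.

Definition phi (z : R[i]) : A := cdadd (cdscale (complex.Re z) 1_) (cdscale (complex.Im z) J).
Definition co (a : A) : R[i] := Complex (cdinner a 1_) (cdinner a J).

Lemma projE a : proj_CI J a = phi (co a).
Proof. by []. Qed.

Lemma coK z : co (phi z) = z.
Proof. case: z => x y; rewrite /co /phi /=.
by rewrite !innerDl !innerZl inner11 innerJ1 innerJJ (innerC 1_) innerJ1 !mulr0 !mulr1 addr0 add0r. Qed.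

Lemma coD a b : co (cdadd a b) = co a + co b.
Proof. by rewrite /co !innerDl. Qed.

Lemma coZ x a : co (cdscale x a) = x%:C%C * co a.
Proof. rewrite /co !innerZl. apply/eqP; rewrite eq_complex /= !mul0r subr0 addr0. by rewrite !eqxx. Qed.

Lemma co0 : co 0_ = 0.
Proof. by rewrite /co !inner0l. Qed.

Lemma phiD z w : phi (z + w) = cdadd (phi z) (phi w).
Proof. case: z => a b; case: w => c d; rewrite /phi /= !scaleDl.
by rewrite addACA. Qed.

Lemma phi0 : phi 0 = 0_.
Proof. by rewrite /phi /= !scale0 add0. Qed.

Lemma phiZ x z : phi (x%:C%C * z) = cdscale x (phi z).
Proof. case: z => a b; rewrite /phi /= !mul0r subr0 addr0 scaleDr !scaleA. by []. Qed.

Lemma phi1 : phi 1 = 1_.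
Proof. by rewrite /phi /= scale0 addx0 scale1. Qed.

Lemma phiM z w : phi (z * w) = cdmul (phi z) (phi w).
Proof. case: z => a b; case: w => c d; rewrite /phi /=.
rewrite !mulDl !mulDr !mulZl !mulZr cdmul1l cdmul1r JJ cdmul1l !scaleA.
rewrite !scaleDl addACA; congr cdadd; rewrite addC; congr cdadd; congr cdscale.
by rewrite mulrN1.
Qed.

Lemma coM a w : co (cdmul a (phi w)) = co a * w.
Proof. case: w => x y; rewrite /co /phi /= mulDr !mulZr cdmul1r !innerDl !innerZl.
rewrite !(adj R n).1 cdmul1l JJc conjJ innerZr.
apply/eqP; rewrite eq_complex /=; apply/andP; split; apply/eqP; ring.
Qed.

End Phi.


Section Transfer.
Local Open Scope ring_scope.
Variable R : realType.
Variable n : nat.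
Notation A := (CD R n).
Notation "0_" := (cdzero R n).
Notation "1_" := (cdone R n).
Variable J : A.
Hypothesis hJ : imag_unit J.

Notation phi := (phi J).
Notation co := (co J).

Lemma phi_inj z w : phi z = phi w -> z = w.
Proof. by move=> h; rewrite -(coK hJ z) h coK. Qed.

Lemma powE z k : cdpow (phi z) k = phi (z ^+ k).
Proof. elim: k => [|k IH] /=; first by rewrite expr0 phi1.
by rewrite IH exprS phiM. Qed.

Lemma co_big I (r : seq I) (F : I -> A) :
  co (\big[@cdadd R n/0_]_(i <- r) F i) = \sum_(i <- r) co (F i).
Proof. by apply: big_morph; [exact: coD | exact: co0]. Qed.

Lemma phi_big I (r : seq I) (F : I -> R[i]) :
  phi (\sum_(i <- r) F i) = \big[@cdadd R n/0_]_(i <- r) phi (F i).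
Proof. by apply: big_morph; [exact: phiD | exact: phi0]. Qed.

Lemma nth_co (g : seq A) i : nth 0 (map co g) i = co (nth 0_ g i).
Proof. case: (ltnP i (size g)) => hi; first by rewrite (nth_map 0_).
by rewrite !nth_default ?size_map ?co0. Qed.

Lemma co_eval (g : seq A) z : co (cdeval g (phi z)) = (Poly (map co g)).[z].
Proof. have hs : (size (Poly (map co g)) <= size g)%N by rewrite (leq_trans (size_Poly _)) ?size_map.
rewrite /cdeval co_big (@horner_coef_wide _ (size g) _ z hs); apply: eq_bigr => i _.
by rewrite powE coM // coef_Poly nth_co. Qed.

Lemma eval_polyI (g : seq A) z :
  cdeval (polyI J g) (phi z) = phi (Poly (map co g)).[z].
have hs : (size (Poly (map co g)) <= size g)%N by rewrite (leq_trans (size_Poly _)) ?size_map.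
rewrite (@horner_coef_wide _ (size g) _ z hs) /cdeval /polyI phi_big size_map; apply: eq_bigr => i _.
by rewrite (nth_map 0_) // projE powE (phiM hJ) coef_Poly nth_co. Qed.

Lemma nth_polyI (g : seq A) k : nth 0_ (polyI J g) k = phi (Poly (map co g))`_k.
Proof. rewrite coef_Poly nth_co /polyI; case: (ltnP k (size g)) => hk.
  by rewrite (nth_map 0_).
by rewrite !nth_default ?size_map // co0 phi0. Qed.

Lemma deriv_co (f : seq A) : Poly (map co (cdderiv f)) = (Poly (map co f))^`().
Proof. apply/polyP => i; rewrite coef_deriv !coef_Poly !nth_co.
case: (ltnP i (size f).-1) => hi.
  rewrite /cdderiv nth_mkseq // coZ rmorph_nat mulr_natl. by [].
rewrite (nth_default _ (_ : size (cdderiv f) <= i)%N); last by rewrite size_mkseq.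
rewrite (nth_default _ (_ : size f <= i.+1)%N) ?co0 ?mul0rn //.
by move: hi; case: (size f).
Qed.
End Transfer.


Section Decomp.
Local Open Scope ring_scope.
Variable R : realType.
Variable m : nat.

Lemma e_unit : imag_unit ((cdzero R m, cdone R m) : CD R m.+1).
Proof. split.
  rewrite /cdtr /= conj0 add0 oppE addN. by [].
rewrite /cdnorm /= conj0 cdmul0l !oppE conj1 mulZr cdmul1l scaleA mulrNN mulr1.
by rewrite add0 scale1 !cdmul0r add0.
Qed.

Lemma decomp (r : CD R m.+1) : exists J z0, imag_unit J /\ r = phi J z0.
Proof.
pose one := cdone R m.+1.
pose a := cdinner r one.
pose v := cdadd r (cdscale (-1) (cdscale a one)).
have rE : r = cdadd (cdscale a one) v.
  by rewrite /v addC -addA (addC _ (cdscale a one)) addN addx0.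
have hv1 : cdinner v one = 0.
  by rewrite /v innerDl !innerZl inner11 mulr1 /a; ring.
have [v0|vn0] := eqVneq (cdinner v v) 0.
  exists (cdzero R m, cdone R m), (a%:C)%C; split; first exact: e_unit.
  by rewrite {1}rE (inner_eq0 v0) addx0 /phi [complex.Re _]/= [complex.Im _]/= scale0 addx0.
have vpos : 0 < cdinner v v by rewrite lt_def vn0 inner_ge0.
set b := Num.sqrt (cdinner v v).
have bpos : 0 < b by rewrite sqrtr_gt0.
have b0 : b != 0 by rewrite gt_eqF.
exists (cdscale b^-1 v), (a +i* b)%C; split; last first.
  by rewrite /phi [complex.Re _]/= [complex.Im _]/= scaleA divff // scale1 {1}rE.
split.
  by rewrite /cdtr conjZ -scaleDr trE hv1 mulr0 scale0 scalex0.
rewrite /cdnorm conjZ mulZl mulZr normE !scaleA.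
have hb2 : cdinner v v = b ^+ 2 by rewrite sqr_sqrtr // ltW.
by rewrite hb2 expr2 mulrA mulfVK // mulVf // scale1.
Qed.
End Decomp.

Section Final.
Local Open Scope ring_scope.

Lemma nonneg_real (R : realType) (v : R[i]) : 0 <= v -> ((complex.Re v)%:C)%C = v /\ 0 <= complex.Re v.
Proof. case: v => x y; rewrite lecE /= => /andP [/eqP y0 hx]; split => //. by rewrite y0. Qed.

End Final.

Local Open Scope ring_scope.

Theorem theorem4p8 (R : realType) (n : nat) (f : seq (CD R n.+1))
  (r : CD R n.+1) :
  cdeval (cdderiv f) r = cdzero R n.+1 -> snail f r.
Proof.
move=> hd.
have [J [z0 [hJ rE]]] := decomp r.
exists J; split => //.
pose p := Poly (map (co J) f).
have hd' : p^`().[z0] = 0%R.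
  by rewrite -(deriv_co J) -(co_eval hJ) -rE hd co0.
have nthE := nth_polyI J f.
rewrite /K_CI /=.
case: (ltnP 1 (size p)) => sp.
  left; split.
    exists (size p).-1; split; first by case: (size p) sp => [|[|k]].
    rewrite nthE -lead_coefE => h.
    have : lead_coef p = 0%R by apply: (phi_inj hJ); rewrite h phi0.
    move/eqP; rewrite lead_coef_eq0 => /eqP p0.
    by move: sp; rewrite -/p p0 size_poly0.
  have [k [w [zeta [w0 [rts [sw zE]]]]]] := GL sp hd'.
  exists k, (fun i => complex.Re (w i)), (fun i => phi J (zeta i)).
  split; first by move=> i; case: (nonneg_real (w0 i)).
  split.
    move=> i; split.
      by exists (complex.Re (zeta i)), (complex.Im (zeta i)); rewrite realE.
    by rewrite (eval_polyI hJ) -/p (eqP (rts i)) phi0.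
  split.
    apply: (@complexI R); rewrite rmorph_sum rmorph1 -sw.
    by apply: eq_bigr => i _; case: (nonneg_real (w0 i)).
  rewrite rE zE (phi_big J); apply: eq_bigr => i _.
  by case: (nonneg_real (w0 i)) => <- _; rewrite (phiZ J).
right; split.
  move=> [k [k0 hk]]; apply: hk; rewrite nthE nth_default ?phi0 //.
  exact: leq_trans sp k0.
by exists (complex.Re z0), (complex.Im z0); rewrite rE realE.
Qed.
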